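(* Let $t\in[0,1]$. For every $\eta\in(0,1)$ there exists a constant $c_\eta>0$ depending only on $\eta$ such that for any $n,p$ and any fixed design $\boldsymbol{X}\in\mathbb{R}^{n\times p}$, $$\mathcal{R}_{1+t,\boldsymbol{X}}\bigl(c_\eta n^{-t/(1+t)}\bigr)\ge 1-\eta.$$
   Context: Data: $\boldsymbol{Z}=\boldsymbol{X}\beta^Z+\boldsymbol{e}$ and $\boldsymbol{Y}=\boldsymbol{X}\beta+b\boldsymbol{Z}+\boldsymbol{\varepsilon}$ with $\beta,\beta^Z\in\mathbb{R}^p$, $b\in\mathbb{R}$, where $\varepsilon_1,\ldots,\varepsilon_n$ are i.i.d. from $\mathbb{P}_\varepsilon$ with mean $0$, $e_1,\ldots,e_n$ are i.i.d. from $\mathbb{P}_e$ with mean $0$, and $\boldsymbol\varepsilon$ is independent of $\boldsymbol e$. For $s>0$, $\mathcal{D}_s$ is the class of distributions of a random variable $\xi$ with $\mathbb{E}[\xi]=0$ and $1\le\mathbb{E}[|\xi|^s]\le2$; $\tilde{\mathcal{D}}$ is the class of distributions with $\mathbb{P}(|\xi|>1/2)>1/2$. $\mathbb{P}_{b}$ denotes the law of the data with coefficient $b$ (for given $\boldsymbol X,\beta,\beta^Z,\mathbb{P}_\varepsilon,\mathbb{P}_e$). With $\Phi$ the class of measurable functions of $(\boldsymbol{X},\boldsymbol{Z},\boldsymbol{Y})$ with values in $\{0,1\}$, the minimax testing risk is $$\mathcal{R}_{s,\boldsymbol{X}}(\tau):=\inf_{\varphi\in\Phi}\Bigl\{\sup_{\mathbb{P}_\varepsilon\in\mathcal{D}_s}\sup_{\mathbb{P}_e\in\mathcal{D}_1\cap\tilde{\mathcal{D}}}\sup_{\beta,\beta^Z\in\mathbb{R}^p}\mathbb{P}_0(\varphi=1)+\sup_{|b|\ge\tau}\sup_{\mathbb{P}_\varepsilon\in\mathcal{D}_s}\sup_{\mathbb{P}_e\in\mathcal{D}_1\cap\tilde{\mathcal{D}}}\sup_{\beta,\beta^Z\in\mathbb{R}^p}\mathbb{P}_b(\varphi=0)\Bigr\}.$$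 *)

(* Defs.v *)
From HB Require Import structures.
From mathcomp Require Import all_boot all_order all_algebra.
From mathcomp Require Import all_classical all_reals all_analysis.
Set Implicit Arguments. Unset Strict Implicit. Unset Printing Implicit Defensive.
Import Order.TTheory GRing.Theory Num.Theory.
Local Open Scope classical_set_scope.
Local Open Scope ring_scope.

Section defs.
Variable R : realType.

(* Expectation with respect to the n-fold product measure mu^{(x) n} of a
   nonnegative function on n.-tuples, written as the iterated integral
   (Tonelli).  iint mu n f = \int f d(mu^{(x) n}). *)
Fixpoint iint (mu : probability R R) (n : nat)
  : (n.-tuple R -> \bar R) -> \bar R :=
  match n return (n.-tuple R -> \bar R) -> \bar R with
  | 0 => fun f => f [tuple]
  | m.+1 => fun f => (\int[mu]_x iint mu (fun t : m.-tuple R => f [tuple of x :: t]))%E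
  end.

Definition Dclass (s : R) (P : probability R R) : Prop :=
  P.-integrable setT (fun x : R => x%:E) /\
  (\int[P]_x x%:E = 0)%E /\
  (1 <= \int[P]_x (powR `|x| s)%:E <= 2%:E)%E.

Definition Dtilde (P : probability R R) : Prop :=
  ((1 / 2)%:E < P [set x : R | (1 / 2 < `|x|)%R])%E.

Definition dataZ n p (X : 'M[R]_(n, p)) (betaZ : 'cV[R]_p) (e : n.-tuple R)
  : n.-tuple R := [tuple (X *m betaZ) i 0 + tnth e i | i < n].

Definition dataY n p (X : 'M[R]_(n, p)) (beta betaZ : 'cV[R]_p) (b : R)
  (eps e : n.-tuple R) : n.-tuple R :=
  [tuple (X *m beta) i 0 + b * tnth (dataZ X betaZ e) i + tnth eps i | i < n].

Definition law n p (X : 'M[R]_(n, p)) (beta betaZ : 'cV[R]_p) (b : R)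
  (Peps Pe : probability R R) (A : set (n.-tuple R * n.-tuple R)) : \bar R :=
  iint Peps (fun eps : n.-tuple R =>
    iint Pe (fun e : n.-tuple R =>
      (\1_A (dataZ X betaZ e, dataY X beta betaZ b eps e))%:E)).

Definition typeI (s : R) n p (X : 'M[R]_(n, p))
  (A : set (n.-tuple R * n.-tuple R)) : \bar R :=
  ereal_sup [set y | exists (beta betaZ : 'cV[R]_p) (Peps Pe : probability R R),
    [/\ Dclass s Peps, Dclass 1 Pe, Dtilde Pe & y = law X beta betaZ 0 Peps Pe A]].

Definition typeII (s : R) n p (X : 'M[R]_(n, p)) (tau : R)
  (A : set (n.-tuple R * n.-tuple R)) : \bar R :=
  ereal_sup [set y | exists (b : R) (beta betaZ : 'cV[R]_p)
                            (Peps Pe : probability R R),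
    [/\ tau <= `|b|, Dclass s Peps, Dclass 1 Pe, Dtilde Pe &
        y = law X beta betaZ b Peps Pe (~` A)]].

(* Minimax testing risk R_{s,X}(tau): infimum over all measurable tests
   phi : (Z,Y) -> {0,1}, i.e. over measurable rejection regions A. *)
Definition minimax_risk (s : R) n p (X : 'M[R]_(n, p)) (tau : R) : \bar R :=
  ereal_inf [set (typeI s X A + typeII s X tau A)%E | A in
    [set A : set (n.-tuple R * n.-tuple R) | measurable A]].
End defs.

(* Main.v *)
Require Import Defs.
From HB Require Import structures.
From mathcomp Require Import all_boot all_order all_algebra.
From mathcomp Require Import all_classical all_reals all_analysis.
From mathcomp Require Import measurable_realfun lra ring.
Set Implicit Arguments. Unset Strict Implicit. Unset Printing Implicit Defensive.
Import Order.TTheory GRing.Theory Num.Theory.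
Import numFieldNormedType.Exports.
Local Open Scope classical_set_scope.
Local Open Scope ring_scope.
Lemma maxr_sub (R : realFieldType) (x : R) : Num.max x 0 - Num.max (-x) 0 = x.
Proof.
case: (lerP 0 x) => h.
  by rewrite (max_idPr _) ?subr0 // oppr_le0.
by rewrite (max_idPl _) ?sub0r ?opprK// oppr_ge0 ltW.
Qed.

Section monot.
Local Open Scope ereal_scope.
Context d (T : measurableType d) (R : realType).
Variable mu : {measure set T -> \bar R}.
Import HBNNSimple.

Lemma le_int_mes_any (f1 f2 : T -> \bar R) : (forall x, 0 <= f1 x) ->
  measurable_fun setT f1 -> (forall x, f1 x <= f2 x) ->
  \int[mu]_x f1 x <= \int[mu]_x f2 x.
Proof.
move=> h10 mh1 h12.
have h20 x : 0 <= f2 x by apply: le_trans (h12 x).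
pose g1 := nnsfun_approx measurableT mh1.
rewrite (@nd_ge0_integral_lim _ _ _ _ _ g1)//; last 2 first.
  by move=> x m n mn; exact/lefP/nd_nnsfun_approx.
  by move=> x; exact: cvg_nnsfun_approx.
apply: lime_le.
  by apply: is_cvg_sintegral => // t m n mn; exact/lefP/nd_nnsfun_approx.
near=> n; rewrite ge0_integralTE//; apply: ereal_sup_ubound => /=.
exists (g1 n) => // t; rewrite (le_trans _ (h12 _))//.
have := leey (f1 t); rewrite le_eqVlt => /predU1P[->|ftoo].
  by rewrite leey.
have h1tfin : f1 t \is a fin_num.
  by rewrite fin_numE gt_eqF/= ?lt_eqF// (lt_le_trans _ (h10 t)).
have /= := @cvg_nnsfun_approx _ _ _ _ measurableT _ mh1 (fun x _ => h10 x) t Logic.I.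
rewrite -(fineK h1tfin) => /fine_cvgP[ft_near].
set u_ := (X in X --> _) => u_h1.
have <- : lim u_ = fine (f1 t) by exact/cvg_lim.
rewrite lee_fin; apply: nondecreasing_cvgn_le.
  by move=> // a b ab; rewrite /u_ /=; exact/lefP/nd_nnsfun_approx.
by apply/cvg_ex; eexists; exact: u_h1.
Unshelve. all: by end_near. Qed.

Lemma le_int_any_mes (f1 f2 : T -> \bar R) : (forall x, 0 <= f1 x) ->
  measurable_fun setT f2 -> (forall x, f1 x <= f2 x) ->
  \int[mu]_x f1 x <= \int[mu]_x f2 x.
Proof.
move=> h10 mh2 h12.
have h20 x : 0 <= f2 x by apply: le_trans (h12 x).
rewrite ge0_integralTE//; apply: ub_ereal_sup => _ [g /= gf <-].
rewrite -integralT_nnsfun; apply: ge0_le_integral => //.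
- by move=> x _; rewrite lee_fin.
- by apply/measurable_EFinP; exact: measurable_funPT.
- by move=> x _; apply: le_trans (gf x) (h12 x).
Qed.
End monot.
Section dprob.
Context (R : realType) (k : nat) (w a : nat -> R) (w0 : forall i, 0 <= w i)
  (w1 : \sum_(i < k) w i = 1).
Definition dmeas_ : {measure set R -> \bar R}^nat :=
  fun i => mscale (NngNum (w0 i)) \d_(a i).
Definition dprob := msum dmeas_ k.
Let dprob_setT : dprob setT = 1%E.
Proof.
rewrite /dprob /msum /dmeas_ /= /mscale /=.
under eq_bigr do rewrite diracT mule1.
by rewrite sumEFin w1.
Qed.
HB.instance Definition _ := Measure.on dprob.
HB.instance Definition _ := @Measure_isProbability.Build _ _ R dprob dprob_setT.
Definition dP : probability R R := dprob.
Local Open Scope ereal_scope.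
Lemma meas_ifS (G : R -> \bar R) (c : \bar R) :
  measurable_fun setT (fun y => if `[< exists2 i, (i < k)%N & y = a i >] then G y else c).
Proof.
move=> _ Y mY; rewrite setTI.
pose U := \bigcup_i (if (i < k)%N && `[< Y (G (a i)) >] then [set a i] else set0).
pose S := \bigcup_i (if (i < k)%N then [set a i] else set0).
have mU : measurable U.
  by apply: bigcupT_measurable => i; case: ifP => _ //; exact: measurable_set1.
have mS : measurable S.
  by apply: bigcupT_measurable => i; case: ifP => _ //; exact: measurable_set1.
have [Yc|Yc] := pselect (Y c).
- suff -> : (fun y => if `[< exists2 i, (i < k)%N & y = a i >] then G y else c) @^-1` Y = U `|` ~` S.
    by apply: measurableU => //; exact: measurableC.
  apply/seteqP; split => y /=.
  + case: asboolP => [[i ik ->] YG|nS _]; [left; exists i => //; rewrite ik /=; case: asboolP|right].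
    * by [].
    * by [].
    by move=> [j _]; case: ifP => // jk /= yj; apply: nS; exists j.
  + case: asboolP => [[i ik ->]|//] [[j _]|].
    * by case: ifP => //= /andP[_ /asboolP] + ->.
    * by case; exists i => //; rewrite ik.
- suff -> : (fun y => if `[< exists2 i, (i < k)%N & y = a i >] then G y else c) @^-1` Y = U by [].
  apply/seteqP; split => y /=.
  + case: asboolP => [[i ik ->] YG|//]; exists i => //; rewrite ik /=; case: asboolP.
    * by [].
    * by [].
  + move=> [j _]; case: ifP => //= /andP[jk /asboolP YG] ->.
    by case: asboolP => // -[]; exists j.
Qed.
Lemma int_meas (F : R -> \bar R) : (forall x, 0 <= F x) -> measurable_fun setT F ->
  \int[dprob]_x F x = \sum_(i < k) (w i)%:E * F (a i).
Proof.
move=> F0 mF; rewrite /dprob ge0_integral_measure_sum//.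
apply: eq_bigr => i _; rewrite /dmeas_ ge0_integral_mscale//.
by rewrite integral_dirac// diracT mul1e.
Qed.

Lemma int_dprob (F : R -> \bar R) : (forall x, 0 <= F x) ->
  \int[dprob]_x F x = \sum_(i < k) (w i)%:E * F (a i).
Proof.
move=> F0.
pose g := fun y => if `[< exists2 i, (i < k)%N & y = a i >] then F y else 0.
pose h := fun y => if `[< exists2 i, (i < k)%N & y = a i >] then F y else +oo.
have ga i : (i < k)%N -> g (a i) = F (a i).
  by move=> ik; rewrite /g; case: asboolP => // -[]; exists i.
have ha i : (i < k)%N -> h (a i) = F (a i).
  by move=> ik; rewrite /h; case: asboolP => // -[]; exists i.
have g0 x : 0 <= g x by rewrite /g; case: ifP.
have gF x : g x <= F x by rewrite /g; case: ifP.
have Fh x : F x <= h x by rewrite /h; case: ifP => //; rewrite leey.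
have Ig : \int[dprob]_x g x = \sum_(i < k) (w i)%:E * F (a i).
  by rewrite int_meas//; [apply: eq_bigr => i _; rewrite (ga _ (ltn_ord i))|exact: meas_ifS].
have Ih : \int[dprob]_x h x = \sum_(i < k) (w i)%:E * F (a i).
  have h0 x : 0 <= h x by apply: le_trans (Fh x).
  by rewrite int_meas//; [apply: eq_bigr => i _; rewrite (ha _ (ltn_ord i))|exact: meas_ifS].
apply/eqP; rewrite eq_le; apply/andP; split.
- by rewrite -Ih; apply: le_int_any_mes => //; exact: meas_ifS.
- by rewrite -Ig; apply: le_int_mes_any => //; exact: meas_ifS.
Qed.
Lemma int_dprobR (F : R -> R) :
  \int[dprob]_x (F x)%:E = (\sum_(i < k) w i * F (a i))%R%:E.
Proof.
rewrite integralE !int_dprob//.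
under eq_bigr do rewrite funeposE.
under [X in _ - X]eq_bigr do rewrite funenegE.
under eq_bigr do rewrite -EFin_max -EFinM.
under [X in _ - X]eq_bigr do rewrite -EFinN -EFin_max -EFinM.
rewrite !sumEFin -EFinB -sumrB; congr EFin.
apply: eq_bigr => i _; rewrite -mulrBr; congr (_ * _)%R; exact: maxr_sub.
Qed.
End dprob.
Section riint.
Context (R : realType) (k : nat) (w : nat -> R).
Hypothesis w0 : forall i, 0 <= w i.
Hypothesis w1 : \sum_(i < k) w i = 1.

Fixpoint riint (a : nat -> R) (n : nat) : (n.-tuple R -> R) -> R :=
  match n return (n.-tuple R -> R) -> R with
  | 0 => fun f => f [tuple]
  | m.+1 => fun f => \sum_(i < k) w i * riint a (fun t : m.-tuple R => f [tuple of a i :: t])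
  end.

Lemma riint_ge0 a n f : (forall t, 0 <= f t) -> 0 <= riint a (n:=n) f.
Proof.
elim: n f => [|m IH] f f0 /=; first exact: f0.
by apply: sumr_ge0 => i _; apply: mulr_ge0 => //; apply: IH.
Qed.

Lemma riint_le1 a n f : (forall t, f t <= 1) -> riint a (n:=n) f <= 1.
Proof.
elim: n f => [|m IH] f f1 /=; first exact: f1.
rewrite -w1; apply: ler_sum => i _.
by rewrite -[leRHS]mulr1; apply: ler_wpM2l => //; apply: IH.
Qed.

Lemma riint_lin a n f : riint a (n:=n) (fun t => 1 - f t) = 1 - riint a f.
Proof.
elim: n f => [|m IH] f //=.
under eq_bigr do rewrite IH mulrBr mulr1.
by rewrite sumrB w1.
Qed.

Variables (a0 a1 : nat -> R) (bad : nat -> bool).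
Let rho := \sum_(i < k | bad i) w i.

Lemma absB01 (x y : R) : 0 <= x <= 1 -> 0 <= y <= 1 -> `|x - y| <= 1.
Proof.
move=> /andP[x0 x1] /andP[y0 y1].
by rewrite ler_norml; apply/andP; split; rewrite ?lerBlDr; lra.
Qed.

Lemma riint_couple n (f0 f1 : n.-tuple R -> R) (d : R) : 0 <= d ->
  (forall t, 0 <= f0 t <= 1) -> (forall t, 0 <= f1 t <= 1) ->
  (forall J : n.-tuple nat, all (fun j => (j < k)%N && ~~ bad j) J ->
     `|f0 (map_tuple a0 J) - f1 (map_tuple a1 J)| <= d) ->
  `|riint a0 f0 - riint a1 f1| <= n%:R * rho + d.
Proof.
move=> d0; elim: n f0 f1 => [|m IH] f0 f1 f01 f11 H /=.
  rewrite mul0r add0r; have := H [tuple] isT.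
  by congr (`|f0 _ - f1 _| <= d); apply: val_inj.
rewrite -sumrB.
under eq_bigr do rewrite -mulrBr.
rewrite (bigID (fun i : 'I_k => bad i)) /=.
have rho0 : 0 <= rho by apply: sumr_ge0.
have Hb : `|\sum_(i < k | bad i) w i * (riint a0 (fun t : m.-tuple R => f0 [tuple of a0 i :: t]) -
       riint a1 (fun t : m.-tuple R => f1 [tuple of a1 i :: t]))| <= rho.
  apply: le_trans (ler_norm_sum _ _ _) _; apply: ler_sum => i _.
  rewrite normrM ger0_norm // -[leRHS]mulr1; apply: ler_wpM2l => //.
  apply: absB01; apply/andP; split.
  - by apply: riint_ge0 => t; case/andP: (f01 [tuple of a0 i :: t]).
  - by apply: riint_le1 => t; case/andP: (f01 [tuple of a0 i :: t]).
  - by apply: riint_ge0 => t; case/andP: (f11 [tuple of a1 i :: t]).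
  - by apply: riint_le1 => t; case/andP: (f11 [tuple of a1 i :: t]).
have Hg : `|\sum_(i < k | ~~ bad i) w i * (riint a0 (fun t : m.-tuple R => f0 [tuple of a0 i :: t]) -
       riint a1 (fun t : m.-tuple R => f1 [tuple of a1 i :: t]))| <= m%:R * rho + d.
  apply: le_trans (ler_norm_sum _ _ _) _.
  apply: (@le_trans _ _ (\sum_(i < k | ~~ bad i) w i * (m%:R * rho + d))).
    apply: ler_sum => i gi; rewrite normrM ger0_norm //; apply: ler_wpM2l => //.
    apply: IH.
    - by move=> t; apply: f01.
    - by move=> t; apply: f11.
    move=> J HJ; have := H [tuple of (nat_of_ord i) :: J].
    rewrite /= ltn_ord gi HJ => /(_ isT).
    by congr (`|f0 _ - f1 _| <= d); apply: val_inj.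
  rewrite -big_distrl /= -[leRHS]mul1r; apply: ler_wpM2r.
    by apply: addr_ge0 => //; apply: mulr_ge0.
  rewrite -w1 [leRHS](bigID (fun i : 'I_k => ~~ bad i)) /= lerDl.
  by apply: sumr_ge0.
apply: le_trans (ler_normD _ _) _.
rewrite addrC; apply: le_trans (lerD Hg Hb) _.
by rewrite -natr1 mulrDl mul1r; lra.
Qed.
End riint.
Section link.
Context (R : realType) (k : nat) (w a : nat -> R) (w0 : forall i, 0 <= w i)
  (w1 : \sum_(i < k) w i = 1).
Lemma iint_dP n (f : n.-tuple R -> R) : (forall t, 0 <= f t) ->
  iint (@dP R k w a w0 w1) (fun t => (f t)%:E) = (riint k w a f)%:E.
Proof.
elim: n f => [|m IH] f f0 //=.
have E x : iint (dP a w0 w1) (fun t : m.-tuple R => (f [tuple of x :: t])%:E)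
    = (riint k w a (fun t : m.-tuple R => f [tuple of x :: t]))%:E.
  by apply: IH => t; apply: f0.
rewrite int_dprob => [|x]; last first.
  by rewrite E lee_fin; apply: riint_ge0 => // t; apply: f0.
rewrite -sumEFin; apply: eq_bigr => i _; rewrite EFinM; congr (_ * _)%E.
exact: E.
Qed.
End link.
Section dclass.
Context (R : realType) (k : nat) (w a : nat -> R) (w0 : forall i, 0 <= w i)
  (w1 : \sum_(i < k) w i = 1).
Local Open Scope ereal_scope.
Lemma Dclass_dP (s : R) : (\sum_(i < k) w i * a i = 0)%R ->
  (1 <= \sum_(i < k) w i * powR `|a i| s <= 2)%R ->
  Dclass s (@dP R k w a w0 w1).
Proof.
move=> mean mom; split; [|split].
- apply/integrableP; split; first by apply/measurable_EFinP; exact: measurable_id.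
  rewrite (@int_dprob R k w a w0 (fun x => `|x%:E|)) //.
  rewrite (eq_bigr (fun i : 'I_k => (w i * `|a i|)%:E)); last by move=> i _; rewrite EFinM.
  by rewrite sumEFin ltry.
- by rewrite (@int_dprobR R k w a w0 (fun x => x)) mean.
- by rewrite (@int_dprobR R k w a w0 (fun x => powR `|x| s)) !lee_fin.
Qed.

Lemma dP_set (A : set R) : @dP R k w a w0 w1 A = \sum_(i < k) (w i)%:E * \d_(a i) A.
Proof. by []. Qed.
End dclass.

Lemma powR_le1 (R : realType) (u t : R) : 0 <= u <= 1 -> 0 <= t -> powR u t <= 1.
Proof.
move=> /andP[u0 u1] t0; have [->|u0'] := eqVneq u 0.
  have [->|t0'] := eqVneq t 0; first by rewrite powRr0.
  by rewrite powR0.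
rewrite -[leRHS](powRr0 u); apply: ger_powR => //.
by rewrite u1 andbT lt_neqAle eq_sym u0' u0.
Qed.

Lemma rate (R : realType) (t eta : R) (n : nat) : 0 <= t <= 1 -> 0 < eta < 1 ->
  let c := eta / 40 in
  let b := c * powR n%:R (- (t / (1 + t))) in
  let r := eta / (20 * (n.+1)%:R) in
  let y := (1 - r) * b / r in
  [/\ 0 <= b <= 1/10 & r * powR y (1 + t) <= 1/10].
Proof.
move=> /andP[t0 t1] /andP[e0 e1] c b r y.
have s0 : 0 < 1 + t by lra.
set N := powR n%:R (- (t / (1 + t))).
have tst : 0 <= t / (1 + t) by apply: divr_ge0 => //; lra.
have N0 : 0 <= N by apply: powR_ge0.
have N1 : N <= 1.
  rewrite /N; case: (posnP n) => [->|np].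
    have [->|tn] := eqVneq (- (t / (1 + t))) 0; first by rewrite powRr0.
    by rewrite powR0.
  rewrite -[leRHS](powRr0 n%:R); apply: ler_powR; first by rewrite ler1n.
  by rewrite oppr_le0.
have c0 : 0 < c by rewrite /c; lra.
have b0 : 0 <= b by rewrite /b mulr_ge0 // ltW.
have bc : b <= c by rewrite /b -[leRHS]mulr1 ler_wpM2l // ltW.
split; first by apply/andP; split => //; rewrite /c in bc; lra.
have n1 : 0 < (n.+1)%:R :> R by rewrite ltr0n.
have r0 : 0 < r by rewrite /r divr_gt0 // mulr_gt0.
have r1 : r <= 1 / 10.
  rewrite /r ler_pdivrMr ?mulr_gt0 //.
  have : 1 <= (n.+1)%:R :> R by rewrite ler1n.
  nra.
set u := b / r.
have u0 : 0 <= u by rewrite /u divr_ge0 // ltW.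
have yu : y <= u.
  rewrite /y /u -mulrA ler_piMl //; lra.
have y0 : 0 <= y.
  rewrite /y -mulrA mulr_ge0 //; lra.
apply: (@le_trans _ _ (r * powR u (1 + t))).
  apply: ler_wpM2l; first exact: ltW.
  by apply: ge0_ler_powR; rewrite ?nnegrE //; lra.
have -> : r * powR u (1 + t) = b * powR u t.
  rewrite powRD; last by rewrite gt_eqF.
  rewrite powRr1 // mulrA /u mulrCA divff ?mulr1 //; exact: lt0r_neq0.
suff : b * powR u t <= c by rewrite /c; lra.
have ur : u = N * (n.+1)%:R / 2.
  rewrite /u /b /r /c /N; field.
  apply/andP; split; apply/eqP; [have : (0 <= n%:R :> R) by [] |]; lra.
have ut : 0 <= powR u t by apply: powR_ge0.
case: (posnP n) => [n0|np].
  have : powR u t <= 1.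
    apply: powR_le1 => //; rewrite u0 /= ur n0 /=; lra.
  move=> H; apply: le_trans bc; rewrite -[leRHS]mulr1; exact: ler_wpM2l.
have nr1 : 1 <= n%:R :> R by rewrite ler1n.
have nN : 0 <= N * n%:R by apply: mulr_ge0 => //; lra.
have uN : u <= N * n%:R by rewrite ur; nra.
apply: (@le_trans _ _ (b * powR (N * n%:R) t)).
  apply: ler_wpM2l => //; apply: ge0_ler_powR => //; rewrite ?nnegrE //.
set a := t / (1 + t).
have n0 : n%:R != 0 :> R by rewrite pnatr_eq0 -lt0n.
have -> : N * n%:R = powR n%:R (1 - a).
  by rewrite powRB ?n0 ?implybT // powRr1 ?ler0n // /N powRN mulrC.
rewrite -powRrM /b -/N -mulrA /N -powRD ?n0 ?implybT //.
have -> : - a + (1 - a) * t = 0 by rewrite /a; field; apply/eqP; lra.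
by rewrite powRr0 mulr1.
Qed.


Lemma powR_ge1_bnd (R : realType) (a s : R) : 1 <= a -> 1 <= s <= 2 ->
  a <= powR a s <= a ^+ 2.
Proof.
move=> a1 /andP[s1 s2]; apply/andP; split; first exact: le1r_powR.
rewrite -powR_mulrn; last by lra.
exact: ler_powR.
Qed.

Lemma powR_le1_bnd (R : realType) (a s : R) : 0 < a <= 1 -> 1 <= s <= 2 ->
  a ^+ 2 <= powR a s <= a.
Proof.
move=> a01 /andP[s1 s2]; apply/andP; split; last exact: ge1r_powR.
rewrite -powR_mulrn; last by case/andP: a01 => ? ?; lra.
exact: ger_powR.
Qed.

Section concrete.
Context (R : realType).
Definition we (r : R) : nat -> R := fun i => nth 0 [:: 1 - r; r] i.
Definition ze (r : R) : nat -> R := fun i => nth 0 [:: 1; - ((1 - r) / r)] i.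
Definition wn (r : R) : nat -> R :=
  fun i => nth 0 [:: (1 - r) / 4; (1 - r) / 4; (1 - r) / 4; (1 - r) / 4; r] i.
Definition an0 : nat -> R := fun i => nth 0 [:: 1; -1; 3/2; -3/2; 0] i.
Definition an1 (r b : R) : nat -> R :=
  fun i => nth 0 [:: 1 - b; -1 - b; 3/2 - b; -3/2 - b; (1 - r) * b / r] i.

Variables (r b t : R).
Hypothesis hr : 0 < r <= 1/10.
Hypothesis hb : 0 <= b <= 1/10.
Hypothesis ht : 0 <= t <= 1.
Hypothesis hy : r * powR ((1 - r) * b / r) (1 + t) <= 1/10.

Lemma we_ge0 i : 0 <= we r i.
Proof. case/andP: hr => ? ?; rewrite /we; case: i => [|[|i]] /=; rewrite ?nth_nil; lra. Qed.
Lemma we_sum : \sum_(i < 2) we r i = 1.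
Proof. rewrite !big_ord_recr big_ord0 /= /we /=; lra. Qed.
Lemma wn_ge0 i : 0 <= wn r i.
Proof. case/andP: hr => ? ?; rewrite /wn; do 5 (case: i => [|i] /=; first lra); rewrite nth_nil; lra. Qed.
Lemma wn_sum : \sum_(i < 5) wn r i = 1.
Proof. rewrite !big_ord_recr big_ord0 /= /wn /=; lra. Qed.

Definition Pe := dP (ze r) we_ge0 we_sum.
Definition P0 := dP an0 wn_ge0 wn_sum.
Definition P1 := dP (an1 r b) wn_ge0 wn_sum.

Lemma Pe_D1 : Dclass 1 Pe.
Proof.
case/andP: hr => ? ?.
apply: Dclass_dP.
- rewrite !big_ord_recr big_ord0 /= /we /ze /=; field; lra.
- rewrite !big_ord_recr big_ord0 /= /we /ze /= !powRr1 ?normr_ge0 //.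
  rewrite normr1 normrN ger0_norm; last by apply: divr_ge0; lra.
  have -> : 0 + (1 - r) * 1 + r * ((1 - r) / r) = 2 * (1 - r) by field; lra.
  apply/andP; split; lra.
Qed.

Lemma Pe_Dt : Dtilde Pe.
Proof.
case/andP: hr => ? ?.
rewrite /Dtilde /Pe dP_set !big_ord_recr big_ord0 /= !diracE /ze /=.
rewrite !mem_set /=; last 2 first.
- rewrite normrN ger0_norm; last by apply: divr_ge0; lra.
  rewrite ltr_pdivlMr //; lra.
- by rewrite normr1; lra.
rewrite /we /= !mule1 add0e -EFinD lte_fin; lra.
Qed.
Lemma P0_D : Dclass (1 + t) P0.
Proof.
case/andP: hr => ? ?; case/andP: ht => ? ?.
apply: Dclass_dP.
- rewrite !big_ord_recr big_ord0 /= /wn /an0 /=; lra.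
- rewrite !big_ord_recr big_ord0 /= /wn /an0 /=.
  rewrite normr0 powR0; last by apply/eqP; lra.
  have -> : `|1| = 1 :> R by rewrite ger0_norm.
  have -> : `|-1| = 1 :> R by rewrite ler0_norm; lra.
  have -> : `|3/2| = 3/2 :> R by rewrite ger0_norm; lra.
  have -> : `|-3/2| = 3/2 :> R by rewrite ler0_norm; lra.
  rewrite powR1.
  have := @powR_ge1_bnd R (3/2) (1 + t); move=> H.
  have /andP[p1 p2] : 3/2 <= powR (3/2) (1 + t) <= (3/2) ^+ 2.
    by apply: H; [lra|apply/andP; split; lra].
  rewrite expr2 in p2.
  apply/andP; split; nra.
Qed.

Lemma P1_D : Dclass (1 + t) P1.
Proof.
case/andP: hr => ? ?; case/andP: ht => ? ?; case/andP: hb => ? ?.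
apply: Dclass_dP.
- rewrite !big_ord_recr big_ord0 /= /wn /an1 /=; field; lra.
- rewrite !big_ord_recr big_ord0 /= /wn /an1 /=.
  have s12 : 1 <= 1 + t <= 2 by apply/andP; split; lra.
  rewrite (ger0_norm (x := 1 - b)); last by lra.
  rewrite (ler0_norm (x := -1 - b)); last by lra.
  rewrite (ger0_norm (x := 3/2 - b)); last by lra.
  rewrite (ler0_norm (x := -3/2 - b)); last by lra.
  have y0 : 0 <= (1 - r) * b / r by apply: divr_ge0; nra.
  rewrite (ger0_norm y0).
  have /andP[q1 q2] := @powR_le1_bnd R (1 - b) (1 + t) (ltac:(apply/andP; split; lra)) s12.
  have /andP[q3 q4] := @powR_ge1_bnd R (- (-1 - b)) (1 + t) (ltac:(lra)) s12.
  have /andP[q5 q6] := @powR_ge1_bnd R (3/2 - b) (1 + t) (ltac:(lra)) s12.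
  have /andP[q7 q8] := @powR_ge1_bnd R (- (-3/2 - b)) (1 + t) (ltac:(lra)) s12.
  have q9 := @powR_ge0 R ((1 - r) * b / r) (1 + t).
  rewrite !expr2 in q1 q4 q6 q8.
  set Q1 := powR (1 - b) _ in q1 q2 *.
  set Q2 := powR (- (-1 - b)) _ in q3 q4 *.
  set Q3 := powR (3/2 - b) _ in q5 q6 *.
  set Q4 := powR (- (-3/2 - b)) _ in q7 q8 *.
  have hy2 := hy.
  set Y := powR ((1 - r) * b / r) _ in q9 hy2 *.
  have HS1 : 49/10 <= Q1 + Q2 + Q3 + Q4 by nra.
  have HS2 : Q1 + Q2 + Q3 + Q4 <= 71/10 by nra.
  have -> : 0 + (1 - r) / 4 * Q1 + (1 - r) / 4 * Q2 + (1 - r) / 4 * Q3 +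
    (1 - r) / 4 * Q4 + r * Y = (1 - r) / 4 * (Q1 + Q2 + Q3 + Q4) + r * Y by ring.
  apply/andP; split; nra.
Qed.
End concrete.


Section data.
Context (R : realType) (n p : nat) (X : 'M[R]_(n, p)).
Definition Yt (b : R) (eps e : n.-tuple R) : n.-tuple R :=
  [tuple b * tnth e i + tnth eps i | i < n].
Lemma dataZ0 e : dataZ X 0 e = e.
Proof. by apply: eq_from_tnth => i; rewrite tnth_mktuple mulmx0 mxE add0r. Qed.
Lemma dataY0 b eps e : dataY X 0 0 b eps e = Yt b eps e.
Proof.
apply: eq_from_tnth => i; rewrite !tnth_mktuple mulmx0 !mxE !add0r.
by [].
Qed.
Lemma indic01 (T : Type) (A : set T) x : 0 <= (\1_A x : R) <= 1.
Proof. by rewrite /indic; case: (x \in A) => /=; rewrite ?lexx ?ler01. Qed.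
Lemma indicC' (T : Type) (A : set T) x : \1_(~` A) x = 1 - \1_A x :> R.
Proof. by rewrite /indic in_setC; case: (x \in A) => /=; rewrite ?subr0 ?subrr. Qed.

Lemma law_eq (b : R) (P Q : probability R R) (A : set (n.-tuple R * n.-tuple R))
  (kq : nat) (wq aq : nat -> R) (wq0 : forall i, 0 <= wq i) (wq1 : \sum_(i < kq) wq i = 1)
  (kp : nat) (wp ap : nat -> R) (wp0 : forall i, 0 <= wp i) (wp1 : \sum_(i < kp) wp i = 1) :
  P = dP ap wp0 wp1 -> Q = dP aq wq0 wq1 ->
  law X 0 0 b P Q A = (riint kp wp ap (fun eps : n.-tuple R =>
     riint kq wq aq (fun e : n.-tuple R => \1_A (e, Yt b eps e))))%:E.
Proof.
move=> -> ->; rewrite /law.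
have -> : (fun eps : n.-tuple R => iint (dP aq wq0 wq1) (fun e : n.-tuple R =>
      (\1_A (dataZ X 0 e, dataY X 0 0 b eps e))%:E)) =
    (fun eps => ((fun eps => riint kq wq aq (fun e : n.-tuple R => \1_A (e, Yt b eps e))) eps)%:E).
  apply/funext => eps /=; rewrite -iint_dP; last by move=> e; case/andP: (indic01 A (e, Yt b eps e)).
  by congr iint; apply/funext => e; rewrite dataZ0 dataY0.
rewrite iint_dP //.
by move=> eps; apply: riint_ge0 => // e; case/andP: (indic01 A (e, Yt b eps e)).
Qed.
End data.

Lemma an1_good (R : realType) (r b : R) j : (j < 5)%N -> j != 4%N -> an1 r b j = @an0 R j - b.
Proof. rewrite /an1 /an0; do 4 (case: j => [|j] /=; first by move=> *; rewrite addrC). by case: j. Qed.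

Lemma ze_good (R : realType) (r : R) j : (j < 2)%N -> j != 1%N -> ze r j = 1.
Proof. by rewrite /ze; do 2 (case: j => [|j] //=). Qed.

Lemma bad_wn (R : realType) (r : R) : \sum_(i < 5 | i == 4%N :> nat) wn r i = r.
Proof. by rewrite big_mkcond /= !big_ord_recr big_ord0 /= /wn /= !add0r. Qed.

Lemma bad_we (R : realType) (r : R) : \sum_(i < 2 | i == 1%N :> nat) we r i = r.
Proof. by rewrite big_mkcond /= !big_ord_recr big_ord0 /= /we /= !add0r. Qed.

Theorem theorem4 (R : realType) (t : R) (ht : 0 <= t <= 1) :
  forall eta : R, 0 < eta < 1 ->
  exists c : R, 0 < c /\
    forall (n p : nat) (X : 'M[R]_(n, p)),
      ((1 - eta)%:E <=
        minimax_risk (1 + t) X (c * (n%:R `^ (- (t / (1 + t))))))%E.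
Proof.
move=> eta he; exists (eta / 40); split; first by case/andP: he => ? ?; lra.
move=> n p X.
have := rate n ht he => /= -[/andP[b0 b1] hy].
set b := eta / 40 * _ in b0 b1 hy *.
set r := eta / (20 * (n.+1)%:R) in hy *.
have hr : 0 < r <= 1/10.
  case/andP: he => e0 e1; have n1 : 1 <= (n.+1)%:R :> R by rewrite ler1n.
  apply/andP; split; first by rewrite /r divr_gt0 // mulr_gt0 //; lra.
  by rewrite /r ler_pdivrMr; nra.
have hb : 0 <= b <= 1/10 by apply/andP.
pose PE := Pe hr; pose Q0 := P0 hr; pose Q1 := P1 b hr.
apply: le_ereal_inf_tmp => _ [A mA <-].
have T1 : (law X 0 0 0 Q0 PE A <= typeI (1 + t) X A)%E.
  apply: ereal_sup_ubound; exists 0, 0, Q0, PE; split => //.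
  - exact: P0_D.
  - exact: Pe_D1.
  - exact: Pe_Dt.
have T2 : (law X 0 0 b Q1 PE (~` A) <= typeII (1 + t) X b A)%E.
  apply: ereal_sup_ubound; exists b, 0, 0, Q1, PE; split => //.
  - by rewrite ger0_norm.
  - exact: (P1_D hr hb ht hy).
  - exact: Pe_D1.
  - exact: Pe_Dt.
apply: le_trans (leeD T1 T2).
rewrite (@law_eq R n p X 0 Q0 PE A 2 (we r) (ze r) (we_ge0 hr) (we_sum r) 5 (wn r) (@an0 R) (wn_ge0 hr) (wn_sum r) erefl erefl).
rewrite (@law_eq R n p X b Q1 PE (~` A) 2 (we r) (ze r) (we_ge0 hr) (we_sum r) 5 (wn r) (an1 r b) (wn_ge0 hr) (wn_sum r) erefl erefl).
rewrite -EFinD lee_fin.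
have -> : (fun eps : n.-tuple R =>
     riint 2 (we r) (ze r) (fun e : n.-tuple R => \1_(~` A) (e, Yt b eps e))) =
   (fun eps : n.-tuple R =>
     1 - riint 2 (we r) (ze r) (fun e : n.-tuple R => \1_A (e, Yt b eps e))).
  apply/funext => eps; rewrite -riint_lin; last exact: we_sum.
  by congr riint; apply/funext => e; rewrite indicC'.
rewrite riint_lin; last exact: wn_sum.
set F0 := riint 5 _ _ _; set F1 := riint 5 _ _ _.
have f01 b' (eps : n.-tuple R) : 0 <= riint 2 (we r) (ze r) (fun e : n.-tuple R => \1_A (e, Yt b' eps e)) <= 1.
  apply/andP; split.
  - apply: riint_ge0; first exact: we_ge0.
    by move=> e; case/andP: (@indic01 R _ A (e, Yt b' eps e)).
  - apply: riint_le1; [exact: we_ge0|exact: we_sum|].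
    by move=> e; case/andP: (@indic01 R _ A (e, Yt b' eps e)).
have C : `|F0 - F1| <= n%:R * r + n%:R * r.
  have := @riint_couple R 5 (wn r) (wn_ge0 hr) (wn_sum r) (@an0 R) (an1 r b)
    (fun j => j == 4%N) n _ _ (n%:R * r).
  rewrite bad_wn; apply.
  - by apply: mulr_ge0 => //; have [? ?] := andP hr; lra.
  - by move=> eps; apply: f01.
  - by move=> eps; apply: f01.
  move=> J HJ.
  have := @riint_couple R 2 (we r) (we_ge0 hr) (we_sum r) (ze r) (ze r)
    (fun j => j == 1%N) n _ _ 0.
  rewrite bad_we addr0; apply => //.
  - by move=> e; apply: indic01.
  - by move=> e; apply: indic01.
  move=> K HK.
  suff -> : Yt 0 (map_tuple (@an0 R) J) (map_tuple (ze r) K) = Yt b (map_tuple (an1 r b) J) (map_tuple (ze r) K).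
    by rewrite subrr normr0.
  apply: eq_from_tnth => i; rewrite !tnth_mktuple !tnth_map.
  move/all_tnthP: HJ => /(_ i) /andP[J5 J4].
  move/all_tnthP: HK => /(_ i) /andP[K2 K1].
  by rewrite an1_good // ze_good // mul0r add0r mulr1 addrC subrK.
have : n%:R * r + n%:R * r <= eta.
  case/andP: he => e0 e1.
  have -> : n%:R * r + n%:R * r = eta * (n%:R / (10 * (n.+1)%:R)).
    by rewrite /r; field; rewrite addrC natr1 pnatr_eq0.
  rewrite -[leRHS]mulr1 ler_wpM2l //; first lra.
  rewrite ler_pdivrMr ?mulr_gt0 ?ltr0n // mul1r.
  have : (n%:R <= (n.+1)%:R :> R) by rewrite ler_nat.
  have : (0 <= n%:R :> R) by [].
  lra.
move: C; rewrite ler_norml => /andP[C1 C2] H.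
lra.
Qed.
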